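(* Let $\mathscr Q_n$ be a non-singular quadric in $\mathrm{PG}(n,2)$ of projective index $g\geq 1$, with point-graph $\Gamma$. For each integer $s$ with $0\leq s<g$, let $\Gamma_s$ be the graph obtained from $\Gamma$ by the Godsil–McKay switching with respect to the partition $\{\mathcal X_s,\mathcal Y_s\}$ (defined below). Then $\{\mathcal X_s,\mathcal Y_s\}$ is a Godsil–McKay partition of $\Gamma$, and $\Gamma_s$ is a strongly regular graph with the same parameters as $\Gamma$.
   Context: A non-singular quadric $\mathscr Q_n$ in $\mathrm{PG}(n,q)$ is the point set of a non-degenerate quadric. Its projective index $g$ is the largest dimension of a projective subspace contained in $\mathscr Q_n$; the $g$-dimensional subspaces contained in $\mathscr Q_n$ are its generators. If $n=2r$, $\mathscr Q_n$ is the parabolic quadric $\mathcal P_{2r}$ with $g=r-1$; if $n=2r+1$, it is either the elliptic quadric $\mathcal E_{2r+1}$ with $g=r-1$ or the hyperbolic quadric $\mathcal H_{2r+1}$ with $g=r$. The point-graph $\Gamma$ of $\mathscr Q_n$ has vertex set the points of $\mathscr Q_n$, two distinct points being adjacent iff the line joining them is contained in $\mathscr Q_n$. Fix an integer $s$ with $0\le s<g$ and an $s$-dimensional subspace $\alpha_s$ contained in $\mathscr Q_n$. A point $X$ of $\mathscr Q_n$ has type (i) if $X\in\alpha_s$; type (ii) if $X\notin\alpha_s$ and the $(s+1)$-space $\langle \alpha_s,X\rangle$ is contained in $\mathscr Q_n$; type (iii) otherwise. $\mathcal X_s$ is the set of type (ii) points, $\mathcal Y_s$ the set of points of type (i) or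 (iii). A Godsil–McKay partition of a graph is a partition $\{\mathcal X,\mathcal Y\}$ of its vertices such that $\mathcal X$ induces a regular subgraph and each vertex of $\mathcal Y$ is adjacent to $0$, $\frac12|\mathcal X|$ or $|\mathcal X|$ vertices of $\mathcal X$. The graph $\Gamma_s$ has the same vertex set as $\Gamma$ and the same edges, except that for each vertex $R\in\mathcal Y_s$ having exactly $\frac12|\mathcal X_s|$ neighbours in $\mathcal X_s$ (in $\Gamma$), those edges are deleted and $R$ is joined instead to the other $\frac12|\mathcal X_s|$ vertices of $\mathcal X_s$. *)

(* Defs.v *)
From HB Require Import structures.
From mathcomp Require Import all_boot all_order all_algebra.
Set Implicit Arguments. Unset Strict Implicit. Unset Printing Implicit Defensive.
Import GRing.Theory.
Local Open Scope ring_scope.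

(* Vectors of V(n+1,2); since the field is GF(2), each point of PG(n,2) has a
   unique nonzero representative, so points of PG(n,2) = nonzero vectors. *)
Notation vec n := 'rV['F_2]_(n.+1).

Section Quadric.
Variable n : nat.
Variable A : 'M['F_2]_(n.+1).

Definition qform (x : vec n) : 'F_2 := (x *m A *m x^T) 0 0.

Definition polar (x y : vec n) : 'F_2 := qform (x + y) - qform x - qform y.

Definition nonsingular : Prop :=
  forall x : vec n, x != 0 -> qform x = 0 -> exists y : vec n, polar x y != 0.

Definition in_quadric (S : 'M['F_2]_(n.+1)) : bool :=
  [forall u : vec n, (u <= S)%MS ==> (qform u == 0)].

(* projective index g : max dimension (rank - 1) of a subspace contained in Q *)
Definition proj_index (g : nat) : Prop :=
  (exists S : 'M['F_2]_(n.+1), in_quadric S /\ \rank S = g.+1) /\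
  (forall S : 'M['F_2]_(n.+1), in_quadric S -> (\rank S <= g.+1)%N).

Definition qpoints : {set vec n} := [set x | (x != 0) && (qform x == 0)].

(* point graph: distinct points adjacent iff the line joining them lies in Q *)
Definition qadj : rel (vec n) := fun x y =>
  [&& x \in qpoints, y \in qpoints, x != y & in_quadric (x + y)%MS].

Definition Xs (alpha : 'M['F_2]_(n.+1)) : {set vec n} :=
  [set x in qpoints | ~~ (x <= alpha)%MS && in_quadric (alpha + x)%MS].
Definition Ys (alpha : 'M['F_2]_(n.+1)) : {set vec n} :=
  qpoints :\: Xs alpha.

End Quadric.

Section Graphs.
Variable T : finType.

Definition GM_partition (V : {set T}) (E : rel T) (X Y : {set T}) : Prop :=
  [/\ X :|: Y = V, X :&: Y = set0,
      exists k : nat, forall x, x \in X -> #|[set y in X | E x y]| = k &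
      forall y, y \in Y ->
        let c := #|[set x in X | E y x]| in
        [\/ c = 0%N, c.*2 = #|X| | c = #|X| ] ].

Definition half_vertex (E : rel T) (X Y : {set T}) (r : T) : bool :=
  (r \in Y) && (#|[set x in X | E r x]|.*2 == #|X|).

Definition GM_switch (E : rel T) (X Y : {set T}) : rel T := fun u v =>
  if (half_vertex E X Y u && (v \in X)) || (half_vertex E X Y v && (u \in X))
  then ~~ E u v else E u v.

Definition srg (V : {set T}) (E : rel T) (v k lam mu : nat) : Prop :=
  [/\ #|V| = v,
      forall x, x \in V -> #|[set y in V | E x y]| = k &
      forall x y, x \in V -> y \in V -> x != y ->
        #|[set z in V | E x z && E y z]| = (if E x y then lam else mu)].

End Graphs.

(* Main.v *)
Require Import Defs.
From HB Require Import structures.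
From mathcomp Require Import all_boot all_order all_algebra.
From mathcomp Require Import zify ring lra.
Import GRing.Theory Num.Theory.
Set Implicit Arguments. Unset Strict Implicit. Unset Printing Implicit Defensive.
Local Open Scope ring_scope.

Lemma c2 : 2 \in [pchar 'F_2]. Proof. exact: pchar_Fp. Qed.

Lemma F2cases (a : 'F_2) : a = 0 \/ a = 1.
Proof. case: a => m Hm.
case: m Hm => [|[|m]] Hm; [left|right|]; try exact/val_inj.
exfalso; have := Hm; rewrite (Fp_cast (isT : prime 2)) /=; lia.
Qed.

Lemma F2add (a : 'F_2) : a + a = 0.
Proof. by case: (F2cases a) => ->; [rewrite addr0|apply: (addrr_pchar2 c2)]. Qed.

Lemma F2neq0 (a : 'F_2) : (a != 0) = (a == 1).
Proof. by case: (F2cases a) => ->; rewrite ?oner_eq0 ?eqxx. Qed.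

Lemma mxadd2 m k (x : 'M['F_2]_(m,k)) : x + x = 0.
Proof. by apply/matrixP => i j; rewrite !mxE F2add. Qed.

Lemma mxopp2 m k (x : 'M['F_2]_(m,k)) : - x = x.
Proof. by apply/eqP; rewrite eq_sym -subr_eq0 opprK mxadd2. Qed.

Lemma mxaddK2 m k (x y : 'M['F_2]_(m,k)) : x + y + y = x.
Proof. by rewrite -addrA mxadd2 addr0. Qed.

Lemma mx11_eq0 (M : 'M['F_2]_1) : (M == 0) = (M 0 0 == 0).
Proof.
apply/eqP/eqP => [->|H]; first by rewrite mxE.
by rewrite [M]mx11_scalar H raddf0.
Qed.

Section Geo.
Variable n : nat.
Variable A : 'M['F_2]_(n.+1).
Local Notation N := n.+1.
Local Notation Q := (qform A).

Definition C := A + A^T.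
Definition bil (x y : vec n) : 'F_2 := (x *m C *m y^T) 0 0.
Definition ortho m (S : 'M['F_2]_(m, N)) (y : vec n) := S *m C *m y^T == 0.
Definition inq m (S : 'M['F_2]_(m, N)) := forall u : vec n, (u <= S)%MS -> Q u = 0.

Lemma mxDE a b (M N : 'M['F_2]_(a,b)) i j : (M + N) i j = M i j + N i j.
Proof. by rewrite mxE. Qed.

Lemma trE (M : 'M['F_2]_1) : M^T 0 0 = M 0 0.
Proof. by rewrite mxE. Qed.

Lemma qformD x y : Q (x + y) = Q x + Q y + bil x y.
Proof.
rewrite /qform /bil /C linearD /= !mulmxDl !mulmxDr !mxDE.
have -> : (y *m A *m x^T) 0 0 = (x *m A^T *m y^T) 0 0.
  by rewrite -trE !trmx_mul trmxK mulmxA.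
rewrite ?mulmxDr ?mulmxDl ?mxDE. ring.
Qed.

Lemma bilC x y : bil x y = bil y x.
Proof.
have CT : C^T = C by rewrite /C linearD /= trmxK addrC.
by rewrite /bil -trE !trmx_mul trmxK CT mulmxA.
Qed.

Lemma bilxx x : bil x x = 0.
Proof.
rewrite /bil /C mulmxDr mulmxDl mxDE.
have -> : (x *m A^T *m x^T) 0 0 = (x *m A *m x^T) 0 0.
  by rewrite -[LHS]trE !trmx_mul !trmxK mulmxA.
by rewrite F2add.
Qed.

Lemma bilDr x y z : bil x (y + z) = bil x y + bil x z.
Proof. by rewrite /bil (raddfD (@trmx _ _ _)) mulmxDr mxDE. Qed.

Lemma bilDl x y z : bil (x + y) z = bil x z + bil y z.
Proof. by rewrite /bil !mulmxDl mxDE. Qed.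

Lemma bilZr x a y : bil x (a *: y) = a * bil x y.
Proof. by rewrite /bil linearZ /= -scalemxAr mxE. Qed.

Lemma bilx0 x : bil x 0 = 0.
Proof. by rewrite /bil trmx0 mulmx0 mxE. Qed.

Lemma qformZ a x : Q (a *: x) = a * a * Q x.
Proof.
by rewrite /qform linearZ /= -scalemxAr -!scalemxAl !mxE mulrA.
Qed.

Lemma qform0 : Q 0 = 0.
Proof. by rewrite /qform !mul0mx mxE. Qed.

Lemma polarE x y : polar A x y = bil x y.
Proof. rewrite /polar qformD; ring. Qed.

Lemma ortho_bil m (S : 'M_(m, N)) t y : ortho S y -> bil (t *m S) y = 0.
Proof.
move/eqP => H; rewrite /bil.
have -> : t *m S *m C *m y^T = t *m (S *m C *m y^T) by rewrite !mulmxA.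
by rewrite H mulmx0 mxE.
Qed.

Lemma orthoP m (S : 'M_(m, N)) y :
  reflect (forall i, bil (row i S) y = 0) (ortho S y).
Proof.
apply: (iffP eqP) => [H i|H].
  by rewrite /bil -!row_mul H row0 mxE.
apply/matrixP => i j; rewrite (ord1 j) [RHS]mxE.
by have := H i; rewrite /bil -!row_mul mxE.
Qed.

Lemma bil_row1 (x y : vec n) : (ortho x y) = (bil x y == 0).
Proof. by rewrite /ortho mx11_eq0. Qed.

Lemma inq_row (x : vec n) : Q x = 0 -> inq x.
Proof. by move=> Hx u /sub_rVP [a ->]; rewrite qformZ Hx mulr0. Qed.

Lemma inq_sq (S : 'M_N) : in_quadric A S -> inq S.
Proof. by move/forallP => H u Hu; apply/eqP; move: (H u); rewrite Hu. Qed.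

Lemma inq_ortho m (S : 'M_(m, N)) u : inq S -> (u <= S)%MS -> ortho S u.
Proof.
move=> HS Hu; apply/orthoP => i.
have Hr : (row i S <= S)%MS by apply: row_sub.
have := HS _ (addmx_sub Hr Hu).
by rewrite qformD (HS _ Hr) (HS _ Hu) !add0r.
Qed.

Lemma inq_addP m (S : 'M_(m, N)) x : inq S ->
  in_quadric A (S + x)%MS = (Q x == 0) && ortho S x.
Proof.
move=> HS; apply/forallP/andP => [H|[/eqP Hx Ho] u].
  have Hx : Q x = 0 by have := H x; rewrite addsmxSr => /eqP.
  split; first by apply/eqP.
  apply/orthoP => i.
  have Hr : ((row i S + x)%R <= S + x)%MS.
    by apply: addmx_sub; [apply: submx_trans (row_sub _ _) (addsmxSl _ _)|apply: addsmxSr].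
  have := H (row i S + x); rewrite Hr /= qformD Hx HS ?row_sub // !add0r.
  by move/eqP.
apply/implyP => /sub_addsmxP [[t1 t2] ->] /=.
rewrite qformD HS ?submxMl // [t2]mx11_scalar mul_scalar_mx qformZ Hx mulr0.
by rewrite bilZr ortho_bil // mulr0 !add0r.
Qed.


Lemma col_mulE a b c (M : 'M['F_2]_(a,b)) (B : 'M['F_2]_(b,c)) j :
  M *m col j B = col j (M *m B).
Proof. by rewrite !colE mulmxA. Qed.

Lemma exists_orth m (S : 'M_(m, N)) x : nonsingular A ->
  in_quadric A (S + x)%MS -> ~~ (x <= S)%MS ->
  exists a, ortho S a && (bil x a == 1).
Proof.
move=> NS Hq Hx.
case: (boolP [exists a, ortho S a && (bil x a == 1)]) => [/existsP//|/existsPn H].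
exfalso.
have Hb : forall a, ortho S a -> bil x a = 0.
  by move=> a Ha; have := H a; rewrite Ha /= -F2neq0 negbK => /eqP.
have Hsub : (x *m C <= S *m C)%MS.
  rewrite submxE; apply/eqP/matrixP => i j; rewrite (ord1 i) [RHS]mxE.
  have Ha : ortho S (col j (cokermx (S *m C)))^T.
    by rewrite /ortho trmxK col_mulE mulmx_coker; apply/eqP/matrixP => a b; rewrite !mxE.
  by have := Hb _ Ha; rewrite /bil trmxK col_mulE mxE.
case/submxP: Hsub => t Ht.
pose u := x - t *m S.
have Hu0 : u != 0.
  apply: contra Hx; rewrite /u subr_eq0 => /eqP ->; exact: submxMl.
have HuC : u *m C = 0 by rewrite mulmxBl Ht mulmxA subrr.
have Hqu : Q u = 0.
  move/forallP: Hq => /(_ u) /implyP H1; apply/eqP; apply: H1.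
  by apply/sub_addsmxP; exists (-t, 1%:M) => /=; rewrite mul1mx mulNmx addrC.
case: (NS u Hu0 Hqu) => y; rewrite polarE /bil HuC mul0mx mxE eqxx //.
Qed.

End Geo.

Section Count.
Variable T : finType.

Lemma half_split (S : {set T}) (P : pred T) (f : T -> T) :
  (forall v, v \in S -> f v \in S) -> (forall v, v \in S -> f (f v) = v) ->
  (forall v, v \in S -> P (f v) = ~~ P v) ->
  #|[set v in S | P v]| = #|[set v in S | ~~ P v]|.
Proof.
move=> fS ff fP.
have -> : [set v in S | ~~ P v] = f @: [set v in S | P v].
  apply/setP => v; rewrite !inE; apply/andP/imsetP => [[vS Pv]|[w]].
    exists (f v); last by rewrite ff.
    by rewrite inE fS // fP // Pv.
  rewrite inE => /andP [wS Pw] ->; by rewrite fS // fP // Pw.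
rewrite card_in_imset // => u v; rewrite !inE => /andP [uS _] /andP [vS _] E.
by rewrite -(ff u) // E ff.
Qed.

Lemma card_split (S : {set T}) (P : pred T) :
  #|S| = (#|[set v in S | P v]| + #|[set v in S | ~~ P v]|)%N.
Proof.
rewrite -(cardsID [set v | P v] S); congr addn; congr (#|pred_of_set _|); apply/setP => v;
by rewrite !inE andbC.
Qed.

End Count.


Lemma F2flip (b : 'F_2) : (b + 1 == 0) = ~~ (b == 0).
Proof. by case: (F2cases b) => ->; rewrite ?add0r ?F2add ?oner_eq0 ?eqxx. Qed.

Lemma card1 (T : finType) (S : {set T}) a : a \in S -> #|S :\ a| = (#|S| - 1)%N.
Proof. by move=> Ha; rewrite (cardsD1 a S) Ha add1n subn1. Qed.

Section Geo2.
Variable n : nat.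
Variable A : 'M['F_2]_(n.+1).
Local Notation Q := (qform A).
Local Notation bil := (bil A).

Definition closed (W : {set vec n}) := forall u v, u \in W -> v \in W -> u + v \in W.

Lemma perp_half W x a : closed W -> a \in W -> bil x a = 1 ->
  #|W| = (#|[set v in W | bil x v == 0%R]| * 2)%N.
Proof.
move=> cW aW Ha.
rewrite (card_split W (fun v => bil x v == 0%R)) -(@half_split _ W _ (fun v => v + a)).
- by rewrite muln2 addnn.
- by move=> v vW; apply: cW.
- by move=> v _; rewrite mxaddK2.
- by move=> v _; rewrite bilDr Ha F2flip.
Qed.

Lemma sing_rel W x a : closed W -> x \in W -> Q x = 0 -> a \in W -> bil x a = 1 ->
  (4 * #|[set v in W | Q v == 0%R]| =
   4 * #|[set v in W | (bil x v == 0%R) && (Q v == 0%R)]| + #|W|)%N.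
Proof.
move=> cW xW Hx aW Ha.
have h1 := perp_half cW aW Ha.
pose Wn := [set v in W | ~~ (bil x v == 0%R)].
have h2 : #|[set v in Wn | Q v == 0%R]| = #|[set v in Wn | ~~ (Q v == 0%R)]|.
  apply: (@half_split _ Wn _ (fun v => v + x)).
  - move=> v; rewrite !inE => /andP [vW Hv]; rewrite cW //=.
    by rewrite bilDr bilxx addr0.
  - by move=> v _; rewrite mxaddK2.
  - move=> v; rewrite !inE => /andP [vW]; rewrite F2neq0 => /eqP Hv.
    by rewrite qformD Hx addr0 bilC Hv F2flip.
have h3 := card_split Wn (fun v => Q v == 0%R).
have h4 := card_split W (fun v => bil x v == 0%R).
have h5 := card_split [set v in W | Q v == 0%R] (fun v => bil x v == 0%R).
have e1 : [set v in [set v in W | Q v == 0%R] | bil x v == 0%R] =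
          [set v in W | (bil x v == 0%R) && (Q v == 0%R)].
  by apply/setP => v; rewrite !inE; case: (v \in W); case: (bil x v == 0%R); case: (Q v == 0%R).
have e2 : [set v in [set v in W | Q v == 0%R] | ~~ (bil x v == 0%R)] =
          [set v in Wn | Q v == 0%R].
  by apply/setP => v; rewrite !inE; case: (v \in W); case: (bil x v == 0%R); case: (Q v == 0%R).
rewrite e1 e2 in h5.
rewrite /Wn in h2 h3 h5. lia.
Qed.

Lemma nonadj_rel x y : Q x = 0 -> Q y = 0 -> bil x y = 1 ->
  #|[set v | (bil x v == 0%R) && (Q v == 0%R)]| =
  (2 * #|[set v | [&& bil x v == 0%R, bil y v == 0%R & Q v == 0%R]]|)%N.
Proof.
move=> Hx Hy Hxy.
pose S := [set v | (bil x v == 0%R) && (Q v == 0%R)].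
have h1 := card_split S (fun v => bil y v == 0%R).
have h2 : #|[set v in S | bil y v == 0%R]| = #|[set v in S | ~~ (bil y v == 0%R)]|.
  apply: (@half_split _ S _ (fun v => v + x)).
  - move=> v; rewrite !inE => /andP [/eqP H1 /eqP H2].
    by rewrite bilDr bilxx H1 qformD H2 Hx bilC H1 !addr0 eqxx.
  - by move=> v _; rewrite mxaddK2.
  - by move=> v _; rewrite bilDr (bilC A y x) Hxy F2flip.
have e1 : [set v in S | bil y v == 0%R] = [set v | [&& bil x v == 0, bil y v == 0 & Q v == 0%R]].
  by apply/setP => v; rewrite !inE; case: (bil x v == 0%R); case: (bil y v == 0%R); case: (Q v == 0%R).
rewrite e1 in h1 h2.
rewrite /S in h1 h2. lia.
Qed.

Lemma closedT : closed [set: vec n].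
Proof. by move=> u v; rewrite !inE. Qed.

Lemma closed_perp x : closed [set v | bil x v == 0%R].
Proof. by move=> u v; rewrite !inE bilDr => /eqP -> /eqP ->; rewrite addr0. Qed.

Lemma closed_ortho m (S : 'M_(m, n.+1)) : closed [set v | ortho A S v].
Proof.
move=> u v; rewrite !inE => /orthoP Hu /orthoP Hv; apply/orthoP => i.
by rewrite bilDr Hu Hv addr0.
Qed.

Lemma qadjE x y : x \in qpoints A ->
  qadj A x y = [&& y != 0, Q y == 0, x != y & bil x y == 0%R].
Proof.
move=> Hx; have Hqx : Q x = 0 by move: Hx; rewrite inE => /andP [_ /eqP].
rewrite /qadj Hx /= inq_addP; last exact: inq_row.
rewrite bil_row1 inE.
by case: (y != 0); case: (Q y == 0%R).
Qed.

End Geo2.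

Section Main.
Variable n : nat.
Variable A : 'M['F_2]_(n.+1).
Hypothesis NS : nonsingular A.
Local Notation Q := (qform A).
Local Notation bil := (bil A).

Lemma ptsP x : x \in qpoints A -> x != 0 /\ Q x = 0.
Proof. by rewrite inE => /andP [H1 /eqP H2]. Qed.

Lemma exists_a x : x \in qpoints A -> exists a, bil x a = 1.
Proof.
move/ptsP => [H1 H2]; case: (NS H1 H2) => a; rewrite polarE F2neq0 => /eqP.
by exists a.
Qed.

Definition Zs := #|[set v : vec n | Q v == 0%R]|.
Definition Pn := #|[set: vec n]|.
Definition sx x := [set v : vec n | (bil x v == 0%R) && (Q v == 0%R)].
Definition sxy x y := [set v : vec n | [&& bil x v == 0%R, bil y v == 0%R & Q v == 0%R]].

Lemma F1 x : x \in qpoints A ->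
  (4 * Zs = 4 * #|sx x| + Pn)%N /\ Pn = (#|[set v | bil x v == 0%R]| * 2)%N.
Proof.
move=> Hx; have [H1 H2] := ptsP Hx; have [a Ha] := exists_a Hx.
have := sing_rel (@closedT n) (in_setT x) H2 (in_setT a) Ha.
have := perp_half (@closedT n) (in_setT a) Ha.
have -> : [set v in [set: vec n] | Q v == 0%R] = [set v | Q v == 0%R].
  by apply/setP => v; rewrite !inE.
have -> : [set v in [set: vec n] | (bil x v == 0%R) && (Q v == 0%R)] = sx x.
  by apply/setP => v; rewrite !inE.
have -> : [set v in [set: vec n] | bil x v == 0%R] = [set v | bil x v == 0%R].
  by apply/setP => v; rewrite !inE.
rewrite /Zs /Pn => h1 h2; split; [exact: h2|exact: h1].
Qed.

Lemma deg x : x \in qpoints A ->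
  #|[set y in qpoints A | qadj A x y]| = (#|sx x| - 2)%N.
Proof.
move=> Hx; have [H1 H2] := ptsP Hx.
have -> : [set y in qpoints A | qadj A x y] = sx x :\ 0 :\ x.
  apply/setP => y; rewrite !inE qadjE // ?inE [x == y]eq_sym.
  by case: (y == 0); case: (Q y == 0%R); case: (y == x); case: (bil x y == 0%R).
rewrite card1 ?card1 //; first by rewrite -subnDA.
  by rewrite /sx !inE bilx0 qform0 eqxx.
by rewrite /sx !inE bilxx H2 H1 !eqxx.
Qed.

Lemma adj_common x y : x \in qpoints A -> y \in qpoints A -> qadj A x y ->
  #|[set z in qpoints A | qadj A x z && qadj A y z]| = (#|sxy x y| - 3)%N /\
  (4 * #|sx x| = 4 * #|sxy x y| + #|[set v | bil x v == 0%R]|)%N.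
Proof.
move=> Hx Hy Hxy; have [H1 H2] := ptsP Hx; have [H3 H4] := ptsP Hy.
have Hxy' := Hxy; rewrite qadjE // in Hxy'.
case/and4P: Hxy' => _ _ xny /eqP bxy.
split.
  have -> : [set z in qpoints A | qadj A x z && qadj A y z] = sxy x y :\ 0 :\ x :\ y.
    apply/setP => z; rewrite !inE !qadjE // ?inE [x == z]eq_sym [y == z]eq_sym.
    by case: (z == 0); case: (Q z == 0%R); case: (z == x); case: (z == y);
       case: (bil x z == 0%R); case: (bil y z == 0%R).
  rewrite card1 ?card1 ?card1 //; first by rewrite -!subnDA.
  - by rewrite /sxy !inE !bilx0 qform0 eqxx.
  - by rewrite /sxy !inE bilxx H2 (bilC A y x) bxy H1 !eqxx.
  - by rewrite /sxy !inE bilxx H4 bxy H3 eq_sym xny !eqxx.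
have Hq : in_quadric A (x + y)%MS by case/and4P: Hxy.
have Hns : ~~ (y <= x)%MS.
  apply/negP => /sub_rVP [b Hb]; case: (F2cases b) => Eb; rewrite Eb in Hb.
    by move: H3; rewrite Hb scale0r eqxx.
  by move: xny; rewrite Hb scale1r eqxx.
have [a /andP [Ha1 /eqP Ha2]] := exists_orth NS Hq Hns.
rewrite bil_row1 in Ha1.
have := sing_rel (@closed_perp n A x) (_ : y \in [set v | bil x v == 0%R]) H4
          (_ : a \in [set v | bil x v == 0%R]) Ha2.
have -> : [set v in [set v | bil x v == 0%R] | Q v == 0%R] = sx x.
  by apply/setP => v; rewrite !inE.
have -> : [set v in [set v | bil x v == 0%R] | (bil y v == 0%R) && (Q v == 0%R)] = sxy x y.
  by apply/setP => v; rewrite !inE.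
apply; by rewrite inE ?bxy ?Ha1.
Qed.

Lemma nonadj_common x y : x \in qpoints A -> y \in qpoints A -> x != y -> ~~ qadj A x y ->
  #|[set z in qpoints A | qadj A x z && qadj A y z]| = (#|sxy x y| - 1)%N /\
  #|sx x| = (2 * #|sxy x y|)%N.
Proof.
move=> Hx Hy xy Hn; have [H1 H2] := ptsP Hx; have [H3 H4] := ptsP Hy.
have bxy : bil x y = 1.
  by move: Hn; rewrite qadjE // H3 H4 eqxx xy /= F2neq0 => /eqP.
split; last by have := nonadj_rel H2 H4 bxy.
have -> : [set z in qpoints A | qadj A x z && qadj A y z] = sxy x y :\ 0.
  apply/setP => z; rewrite !inE !qadjE // ?inE.
  case: (eqVneq z x) => [->|zx].
    by rewrite (bilC A y x) bxy /= !andbF.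
  case: (eqVneq z y) => [->|zy].
    by rewrite bxy /= !andbF.
  by case: (z == 0); case: (Q z == 0%R); case: (bil x z == 0%R); case: (bil y z == 0%R).
by rewrite card1 // /sxy !inE !bilx0 qform0 eqxx.
Qed.

End Main.

Section Main2.
Variable n : nat.
Variable A : 'M['F_2]_(n.+1).
Hypothesis NS : nonsingular A.

Lemma gamma_srg : srg (qpoints A) (qadj A) #|qpoints A|
  (Zs A - Pn n %/ 4 - 2) (Zs A - Pn n %/ 4 - Pn n %/ 8 - 3) ((Zs A - Pn n %/ 4) %/ 2 - 1).
Proof.
split => // [x Hx|x y Hx Hy xy].
  by rewrite deg //; have [h1 _] := F1 NS Hx; lia.
have [h1 h2] := F1 NS Hx.
case: ifP => Hadj.
  by have [c1 c2] := adj_common NS Hx Hy Hadj; rewrite c1; lia.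
by have [c1 c2] := nonadj_common Hx Hy xy (negbT Hadj); rewrite c1; lia.
Qed.
End Main2.

Section GM.
Variable n : nat.
Variable A : 'M['F_2]_(n.+1).
Hypothesis NS : nonsingular A.
Variable alpha : 'M['F_2]_(n.+1).
Hypothesis Hal : in_quadric A alpha.
Local Notation Q := (qform A).
Local Notation bil := (bil A).
Local Notation X := (Xs A alpha).

Lemma HS : inq A alpha. Proof. exact: inq_sq. Qed.

Lemma XsE x : (x \in X) = [&& x != 0, Q x == 0%R, ~~ (x <= alpha)%MS & ortho A alpha x].
Proof.
rewrite !inE inq_addP; last exact: HS.
by case: (x != 0); case: (Q x == 0%R); case: (x <= alpha)%MS.
Qed.

Lemma bil_alpha u x : (u <= alpha)%MS -> ortho A alpha x -> bil u x = 0.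
Proof. by case/submxP => t ->; apply: ortho_bil. Qed.

Definition OS := [set v : vec n | ortho A alpha v].
Definition AS := [set u : vec n | (u <= alpha)%MS].

Lemma X_reg x : x \in X ->
  #|[set y in X | qadj A x y]| =
  (#|[set v in OS | Q v == 0%R]| - #|OS| %/ 4 - #|AS| - 1)%N.
Proof.
move=> Hx; have Hx' := Hx; rewrite XsE in Hx'.
case/and4P: Hx' => x0 /eqP Qx xa Ox.
have Hxq : x \in qpoints A by rewrite inE x0 Qx eqxx.
have Hq : in_quadric A (alpha + x)%MS by case/setIdP: Hx => _ /andP [].
have [a /andP [Ha1 /eqP Ha2]] := exists_orth NS Hq xa.
have := sing_rel (@closed_ortho n A _ alpha) (_ : x \in OS) Qx (_ : a \in OS) Ha2.
rewrite /OS !inE Ox Ha1 => /(_ isT isT) H.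
pose S := [set v in OS | (bil x v == 0%R) && (Q v == 0%R)].
have -> : [set y in X | qadj A x y] = S :\: AS :\ x.
  apply/setP => y; rewrite inE XsE qadjE // /S /AS !inE.
  case: (eqVneq y 0) => [->|y0]; first by rewrite sub0mx /= ?andbF.
  rewrite [x == y]eq_sym.
  by case: (Q y == 0%R); case: (y <= alpha)%MS; case: (ortho A alpha y);
     case: (y == x); case: (bil x y == 0%R).
have sub : AS \subset S.
  apply/subsetP => u; rewrite /S /AS !inE => Hu.
  rewrite inq_ortho //; last exact: HS.
  by rewrite bilC bil_alpha // HS // eqxx.
rewrite card1; last by rewrite /S /AS !inE xa Ox bilxx Qx eqxx.
rewrite cardsD (setIidPr sub).
move: H; rewrite /S /OS.
set s1 := #|[set v in [set v0 | ortho A alpha v0] | Q v == 0%R]|.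
set s2 := #|[set v in [set v0 | ortho A alpha v0] | (bil x v == 0%R) && (Q v == 0%R)]|.
set s3 := #|[set v | ortho A alpha v]|.
set s4 := #|AS|. lia.
Qed.


Lemma Y_cond y : y \in Ys A alpha ->
  let c := #|[set x in X | qadj A y x]| in
  [\/ c = 0%N, c.*2 = #|X| | c = #|X| ].
Proof.
rewrite /Ys inE => /andP [yX yQ].
have [y0 Qy] := ptsP yQ.
case: (boolP (y <= alpha)%MS) => Hya.
  apply: Or33; congr (#|pred_of_set _|); apply/setP => x.
  rewrite inE; case: (boolP (x \in X)) => //= Hx.
  have Hx' := Hx; rewrite XsE in Hx'; case/and4P: Hx' => x0 Qx xa Ox.
  rewrite qadjE // x0 Qx /= bil_alpha // eqxx andbT.
  by apply: contraNneq xa => <-.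
have Hno : ~~ ortho A alpha y.
  by apply: contra yX => Ho; rewrite XsE y0 Qy eqxx Hya Ho.
have : ~~ [forall i, bil (row i alpha) y == 0%R].
  by apply: contra Hno => /forallP H; apply/orthoP => i; exact/eqP/H.
rewrite negb_forall => /existsP [i]; rewrite F2neq0 => /eqP Hi.
pose a := row i alpha.
have aa : (a <= alpha)%MS by apply: row_sub.
have Qa : Q a = 0 by apply: HS.
have Oa : ortho A alpha a by apply: inq_ortho => //; exact: HS.
apply: Or32.
rewrite (card_split X (qadj A y)) -(@half_split _ X _ (fun v => v + a)).
- by rewrite addnn.
- move=> x; rewrite !XsE => /and4P [x0 /eqP Qx xa Ox].
  apply/and4P; split.
  + apply: contra xa => /eqP H; have -> : x = a.
      by rewrite -[x](mxaddK2 x a) H add0r.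
    exact: aa.
  + by rewrite qformD Qx Qa bilC bil_alpha // !addr0.
  + apply: contra xa => H; rewrite -(mxaddK2 x a); exact: addmx_sub.
  + by have := @closed_ortho n A _ alpha x a; rewrite !inE; apply.
- by move=> v _; rewrite mxaddK2.
- move=> x Hx.
  have Hxa : x + a \in X.
    move: Hx; rewrite !XsE => /and4P [x0 /eqP Qx xa Ox].
    apply/and4P; split.
    + apply: contra xa => /eqP H; have -> : x = a.
        by rewrite -[x](mxaddK2 x a) H add0r.
      exact: aa.
    + by rewrite qformD Qx Qa bilC bil_alpha // !addr0.
    + apply: contra xa => H; rewrite -(mxaddK2 x a); exact: addmx_sub.
    + by have := @closed_ortho n A _ alpha x a; rewrite !inE; apply.
  move: (Hx) (Hxa); rewrite !XsE => /and4P [x0 /eqP Qx _ _] /and4P [xa0 /eqP Qxa _ _].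
  rewrite !qadjE // x0 xa0 Qx Qxa eqxx /=.
  have -> : (y != x) by apply: contraNneq yX => ->.
  have -> : (y != x + a) by apply: contraNneq yX => ->.
  by rewrite bilDr (bilC A y a) Hi F2flip.
Qed.

Lemma GM_part : GM_partition (qpoints A) (qadj A) X (Ys A alpha).
Proof.
split.
- apply/setP => v; rewrite in_setU /Ys in_setD.
  case: (boolP (v \in X)) => H //=.
  by move: H; rewrite inE => /andP [->].
- by apply/setP => v; rewrite in_setI /Ys in_setD in_set0; case: (v \in X); rewrite ?andbF.
- by exists (#|[set v in OS | Q v == 0%R]| - #|OS| %/ 4 - #|AS| - 1)%N => x; apply: X_reg.
- exact: Y_cond.
Qed.

End GM.

Section Mx.
Variable T : finType.
Definition ev (i : 'I_#|T|) : T := enum_val i.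
Definition mxT (f : T -> T -> rat) : 'M[rat]_#|T| := \matrix_(i, j) f (ev i) (ev j).

Lemma sumT (F : T -> rat) : \sum_(z : T) F z = \sum_(i < #|T|) F (ev i).
Proof.
rewrite (reindex (@ev)) //; exists (@enum_rank T) => i _; rewrite /ev.
  exact: enum_valK.
exact: enum_rankK.
Qed.

Lemma mxT_mul f g : mxT f *m mxT g = mxT (fun x y => \sum_z f x z * g z y).
Proof.
apply/matrixP => i j; rewrite !mxE sumT; apply: eq_bigr => k _; by rewrite !mxE.
Qed.

Lemma mxT_ext f g : (forall x y, f x y = g x y) -> mxT f = mxT g.
Proof. by move=> H; apply/matrixP => i j; rewrite !mxE H. Qed.

Lemma mxT_inj f g : mxT f = mxT g -> forall x y, f x y = g x y.
Proof.
move/matrixP => H x y; have := H (enum_rank x) (enum_rank y).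
by rewrite !mxE /ev !enum_rankK.
Qed.

Lemma mxT1 : 1%:M = mxT (fun x y => (x == y)%:R).
Proof. by apply/matrixP => i j; rewrite !mxE /ev (inj_eq enum_val_inj). Qed.

Lemma mxT_comb (k l m : rat) d a j :
  k *: mxT d + l *: mxT a + m *: (mxT j - mxT d - mxT a) =
  mxT (fun x y => k * d x y + l * a x y + m * (j x y - d x y - a x y)).
Proof. by apply/matrixP => i i'; rewrite !mxE. Qed.

Lemma sum_card (S : {set T}) (P : pred T) :
  \sum_(z in S) ((P z)%:R : rat) = #|[set z in S | P z]|%:R.
Proof.
rewrite -sum1_card natr_sum big_mkcond [RHS]big_mkcond; apply: eq_bigr => z _.
by rewrite inE; case: (z \in S); case: (P z).
Qed.

Lemma sum_cardT (P : pred T) :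
  \sum_z ((P z)%:R : rat) = #|[set z | P z]|%:R.
Proof.
have := sum_card [set: T] P; rewrite (eq_bigl xpredT) => [->|z]; last by rewrite inE.
by congr (_%:R); apply: eq_card => z; rewrite !inE.
Qed.

Lemma natb_mul (b1 b2 : bool) : (b1%:R * b2%:R : rat) = (b1 && b2)%:R.
Proof. by case: b1; case: b2; rewrite ?mul0r ?mul1r. Qed.

End Mx.

Section QM.
Variable T : finType.
Variable X : {set T}.
Definition cX : rat := 2%:R / #|X|%:R.
Definition qX (x y : T) : rat :=
  (if (x \in X) && (y \in X) then cX else 0) + (x == y)%:R * (if x \in X then -1 else 1).

Lemma QmL g : mxT qX *m mxT g =
  mxT (fun x y => if x \in X then cX * \sum_(z in X) g z y - g x y else g x y).
Proof.
rewrite mxT_mul; apply: mxT_ext => x y.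
rewrite (eq_bigr (fun z => (if (x \in X) && (z \in X) then cX else 0) * g z y +
   (x == z)%:R * (if x \in X then -1 else 1) * g z y)); last first.
  by move=> z _; rewrite /qX mulrDl.
rewrite big_split /=.
have -> : \sum_z (x == z)%:R * (if x \in X then -1 else 1) * g z y =
          (if x \in X then -1 else 1) * g x y.
  rewrite (bigD1 x) //= eqxx mul1r big1 ?addr0 // => z zx.
  by rewrite eq_sym (negbTE zx) !mul0r.
case: (x \in X) => /=.
  have -> : \sum_z (if z \in X then cX else 0) * g z y = cX * \sum_(z in X) g z y.
    rewrite mulr_sumr [RHS]big_mkcond; apply: eq_bigr => z _.
    by case: (z \in X); rewrite ?mul0r ?mulr0.
  by rewrite mulN1r.
by rewrite big1 ?add0r ?mul1r // => z _; rewrite mul0r.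
Qed.

Lemma QmR g : mxT g *m mxT qX =
  mxT (fun x y => if y \in X then cX * \sum_(z in X) g x z - g x y else g x y).
Proof.
rewrite mxT_mul; apply: mxT_ext => x y.
rewrite (eq_bigr (fun z => g x z * (if (z \in X) && (y \in X) then cX else 0) +
   g x z * (z == y)%:R * (if z \in X then -1 else 1))); last first.
  by move=> z _; rewrite /qX mulrDr mulrA.
rewrite big_split /=.
have -> : \sum_z g x z * (z == y)%:R * (if z \in X then -1 else 1) =
          g x y * (if y \in X then -1 else 1).
  rewrite (bigD1 y) //= eqxx mulr1 big1 ?addr0 // => z zy.
  by rewrite (negbTE zy) mulr0 mul0r.
case: (y \in X) => /=.
  have -> : \sum_z g x z * (if (z \in X) && true then cX else 0) = cX * \sum_(z in X) g x z.
    rewrite mulr_sumr [RHS]big_mkcond; apply: eq_bigr => z _.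
    by rewrite andbT; case: (z \in X); rewrite ?mul0r ?mulr0 // mulrC.
  by rewrite mulrN1.
by rewrite big1 ?add0r ?mulr1 // => z _; rewrite andbF mulr0.
Qed.

End QM.

Section Srg.
Variable T : finType.
Variable V : {set T}.
Definition dV (x y : T) : rat := ((x == y) && (x \in V))%:R.
Definition jV (x y : T) : rat := ((x \in V) && (y \in V))%:R.

Variable F : rel T.
Hypothesis FS : forall x y, F x y = F y x.
Hypothesis Fsupp : forall x y, F x y -> x \in V.
Hypothesis Firr : forall x, F x x = false.
Definition aF x y : rat := (F x y)%:R.

Lemma sq_entry x y : \sum_z aF x z * aF z y = #|[set z | F x z && F z y]|%:R.
Proof. by rewrite -sum_cardT; apply: eq_bigr => z _; rewrite /aF natb_mul. Qed.

Lemma srg_eq v k l mu : srg V F v k l mu ->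
  mxT aF *m mxT aF = (k%:R : rat) *: mxT dV + l%:R *: mxT aF + mu%:R *: (mxT jV - mxT dV - mxT aF).
Proof.
case=> _ Hk Hc; rewrite mxT_comb mxT_mul; apply: mxT_ext => x y.
rewrite sq_entry /dV /jV /aF.
case: (boolP (x \in V)) => xV; last first.
  have -> : [set z | F x z && F z y] = set0.
    apply/setP => z; rewrite !inE; case: (boolP (F x z)) => //= H.
    by have := Fsupp H; rewrite (negbTE xV).
  have -> : F x y = false by apply/negP => /Fsupp; apply/negP.
  rewrite andbF cards0 /=; ring.
case: (boolP (y \in V)) => yV; last first.
  have -> : [set z | F x z && F z y] = set0.
    apply/setP => z; rewrite !inE; case: (boolP (F z y)) => H; last by rewrite andbF.
    by rewrite FS in H; have := Fsupp H; rewrite (negbTE yV).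
  have -> : F x y = false by apply/negP; rewrite FS => /Fsupp; apply/negP.
  have -> : (x == y) = false by apply/negbTE/eqP => exy; move: yV; rewrite -exy xV.
  rewrite andbF cards0 /=; ring.
case: (eqVneq x y) => [<-|nxy].
  have -> : [set z | F x z && F z x] = [set z in V | F x z].
    apply/setP => z; rewrite !inE FS andbb.
    by case: (boolP (F z x)) => H; rewrite ?andbF // (Fsupp H).
  rewrite Hk // Firr /=; ring.
have -> : [set z | F x z && F z y] = [set z in V | F x z && F y z].
  apply/setP => z; rewrite !inE [F z y]FS.
  case: (boolP (F x z)) => H; last by rewrite /= andbF.
  by rewrite FS in H; rewrite (Fsupp H).
rewrite Hc //.
by case: (F x y); rewrite /=; ring.

Qed.

Lemma eq_srg v k l mu : #|V| = v ->
  mxT aF *m mxT aF = (k%:R : rat) *: mxT dV + l%:R *: mxT aF + mu%:R *: (mxT jV - mxT dV - mxT aF) ->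
  srg V F v k l mu.
Proof.
rewrite mxT_comb mxT_mul => Hv H; have H' := mxT_inj H.
split => // [x xV | x y xV yV nxy].
  have := H' x x; rewrite sq_entry /dV /jV /aF Firr eqxx xV /=.
  have -> : [set z | F x z && F z x] = [set z in V | F x z].
    apply/setP => z; rewrite !inE FS andbb.
    by case: (boolP (F z x)) => H1; rewrite ?andbF // (Fsupp H1).
  have -> : (k%:R * 1%:R + l%:R * 0%:R + mu%:R * (1%:R - 1%:R - 0%:R) : rat) = k%:R by ring.
  by move/eqP; rewrite eqr_nat => /eqP.
have := H' x y; rewrite sq_entry /dV /jV /aF xV yV (negbTE nxy) /=.
have -> : [set z | F x z && F z y] = [set z in V | F x z && F y z].
  apply/setP => z; rewrite !inE [F z y]FS.
  case: (boolP (F x z)) => H1; last by rewrite /= andbF.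
  by rewrite FS in H1; rewrite (Fsupp H1).
case: (F x y) => /=.
  have -> : (k%:R * 0%:R + l%:R * 1%:R + mu%:R * (1%:R - 0%:R - 1%:R) : rat) = l%:R by ring.
  by move/eqP; rewrite eqr_nat => /eqP.
have -> : (k%:R * 0%:R + l%:R * 0%:R + mu%:R * (1%:R - 0%:R - 0%:R) : rat) = mu%:R by ring.
by move/eqP; rewrite eqr_nat => /eqP.
Qed.

End Srg.

Section Switch.
Variable T : finType.
Variables V X Y : {set T}.
Variable E : rel T.
Hypothesis Hsym : forall x y, E x y = E y x.
Hypothesis Hsupp : forall x y, E x y -> x \in V.
Hypothesis HU : X :|: Y = V.
Hypothesis HI : X :&: Y = set0.
Variable kX : nat.
Hypothesis Hreg : forall x, x \in X -> #|[set y in X | E x y]| = kX.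
Hypothesis HY : forall y, y \in Y ->
  let c := #|[set x in X | E y x]| in [\/ c = 0%N, c.*2 = #|X| | c = #|X| ].

Local Notation c := (cX X).
Local Notation m := (#|X|%:R : rat).

Lemma XV x : x \in X -> x \in V.
Proof. by move=> Hx; rewrite -HU inE Hx. Qed.

Lemma YV x : x \in Y -> x \in V.
Proof. by move=> Hx; rewrite -HU inE Hx orbT. Qed.

Lemma XnY x : x \in X -> x \in Y = false.
Proof.
move=> Hx; apply/negP => Hy.
have : x \in X :&: Y by rewrite inE Hx Hy.
by rewrite HI inE.
Qed.

Lemma cm x : x \in X -> c * m = 2.
Proof.
move=> Hx; rewrite /cX divfK // pnatr_eq0 -lt0n.
by apply/card_gt0P; exists x.
Qed.

Lemma sumXq y : \sum_(z in X) qX X z y = if y \in X then m * c - 1 else 0.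
Proof.
rewrite (eq_bigr (fun z => (if y \in X then c else 0) + (z == y)%:R * -1)); last first.
  by move=> z Hz; rewrite /qX Hz.
rewrite big_split /= sumr_const.
case: ifP => Hy.
  rewrite (bigD1 y) //= eqxx big1 ?addr0; last first.
    by move=> z /andP [_ zy]; rewrite (negbTE zy) mul0r.
  by rewrite mul1r mulr_natl.
rewrite big1 ?addr0 ?mul0rn // => z Hz.
by have -> : (z == y) = false by apply: contraFF Hy => /eqP <-.
Qed.

Lemma QQ : mxT (qX X) *m mxT (qX X) = 1%:M.
Proof.
rewrite QmL mxT1; apply: mxT_ext => x y /=; rewrite sumXq.
case: ifP => Hx; last by rewrite /qX Hx /=; ring.
rewrite /qX Hx /=; case: ifP => Hy.
  have := cm Hx; rewrite [m * c]mulrC => ->; ring.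
ring.
Qed.



Lemma sumXdl z : \sum_(w in X) dV V w z = (z \in X)%:R.
Proof.
case: (boolP (z \in X)) => Hz.
  rewrite (bigD1 z) //= /dV eqxx XV // big1 ?addr0 // => w /andP [_ wz].
  by rewrite (negbTE wz).
rewrite big1 // => w Hw; rewrite /dV.
by have -> : (w == z) = false by apply/eqP => wz; rewrite -wz Hw in Hz.
Qed.

Lemma sumXdr x : \sum_(z in X) dV V x z = (x \in X)%:R.
Proof.
case: (boolP (x \in X)) => Hx.
  rewrite (bigD1 x) //= /dV eqxx XV // big1 ?addr0 // => w /andP [_ wz].
  by rewrite eq_sym (negbTE wz).
rewrite big1 // => w Hw; rewrite /dV.
by have -> : (x == w) = false by apply/eqP => wz; rewrite wz Hw in Hx.
Qed.

Lemma sumX1 : \sum_(z in X) (1 : rat) = m.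
Proof. by rewrite sumr_const. Qed.

Lemma QDQ : mxT (qX X) *m mxT (dV V) *m mxT (qX X) = mxT (dV V).
Proof.
rewrite QmL QmR; apply: mxT_ext => x y /=.
case Hx : (x \in X); case Hy : (y \in X).
- rewrite sumrB -mulr_sumr sumXdr Hx (eq_bigr (fun z => 1)); last first.
    by move=> z Hz; rewrite sumXdl Hz.
  rewrite sumX1 sumXdl Hy (cm Hx) /=; ring.
- rewrite sumXdl Hy mulr0 add0r /dV.
  have -> : (x == y) = false by apply/eqP => xy; rewrite xy Hy in Hx.
  by rewrite /= oppr0.
- rewrite sumXdr Hx mulr0 add0r /dV.
  have -> : (x == y) = false by apply/eqP => xy; rewrite xy Hy in Hx.
  by rewrite /= oppr0.
- by [].
Qed.


Lemma QJ : mxT (qX X) *m mxT (jV V) = mxT (jV V).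
Proof.
rewrite QmL; apply: mxT_ext => x y /=.
case Hx : (x \in X) => //.
rewrite (eq_bigr (fun z => ((y \in V))%:R)); last by move=> z Hz; rewrite /jV XV.
rewrite sumr_const -(mulr_natr ((y \in V)%:R)) mulrCA (cm Hx) /jV (XV Hx) /=; ring.
Qed.

Lemma JQ : mxT (jV V) *m mxT (qX X) = mxT (jV V).
Proof.
rewrite QmR; apply: mxT_ext => x y /=.
case Hy : (y \in X) => //.
rewrite (eq_bigr (fun z => ((x \in V))%:R)); last by move=> z Hz; rewrite /jV (XV Hz) andbT.
rewrite sumr_const -(mulr_natr ((x \in V)%:R)) mulrCA (cm Hy) /jV (XV Hy) andbT; ring.
Qed.

Lemma QJQ : mxT (qX X) *m mxT (jV V) *m mxT (qX X) = mxT (jV V).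
Proof. by rewrite QJ JQ. Qed.


Definition aE (x y : T) : rat := (E x y)%:R.
Definition aS (x y : T) : rat := (GM_switch E X Y x y)%:R.

Lemma swS u v : GM_switch E X Y u v = GM_switch E X Y v u.
Proof. by rewrite /GM_switch orbC Hsym. Qed.

Lemma sumXa_r x : \sum_(z in X) aE x z = #|[set z in X | E x z]|%:R.
Proof. exact: sum_card. Qed.

Lemma sumXa_l y : \sum_(z in X) aE z y = #|[set z in X | E y z]|%:R.
Proof. rewrite -sum_card; apply: eq_bigr => z _; by rewrite /aE Hsym. Qed.

Lemma side u v : u \notin X -> v \in X ->
  c * #|[set z in X | E u z]|%:R - aE u v = aS u v.
Proof.
move=> uX vX.
have hv : half_vertex E X Y v = false by rewrite /half_vertex XnY.
rewrite /aS /GM_switch vX hv (negbTE uX) andbT andbF orbF /half_vertex /aE.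
case: (boolP (u \in Y)) => uY /=; last first.
  have uV : u \notin V by rewrite -HU inE negb_or uX uY.
  have Euv : E u v = false by apply/negP => /Hsupp; apply/negP.
  have -> : [set z in X | E u z] = set0.
    apply/setP => z; rewrite !inE; case: (boolP (E u z)) => /= H; last by rewrite andbF.
    by have := Hsupp H; rewrite (negbTE uV).
  by rewrite Euv cards0 mulr0 subrr.
case: (HY uY) => [c0|c2|cm'].
- have Euv : E u v = false.
    by have := cards0_eq c0; move/setP/(_ v); rewrite !inE vX.
  rewrite c0 Euv /=.
  have -> : (0.*2 == #|X|) = false.
    by apply/negbTE; rewrite eq_sym -lt0n; apply/card_gt0P; exists v.
  by rewrite mulr0 subrr.
- rewrite c2 eqxx.
  have h : c * (#|[set z in X | E u z]|.*2)%:R = 2 by rewrite c2; exact: (cm vX).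
  rewrite -addnn natrD mulrDr in h.
  have -> : c * #|[set z in X | E u z]|%:R = 1 by lra.
  by case: (E u v).
- have Hs : [set z in X | E u z] = X.
    apply/eqP; rewrite eqEcard cm' leqnn andbT; apply/subsetP => z.
    by rewrite inE => /andP [].
  have Euv : E u v by have := vX; rewrite -{1}Hs inE => /andP [].
  rewrite cm' Euv (cm vX).
  have -> : (#|X|.*2 == #|X|) = false.
    have m0 : (0 < #|X|)%N by apply/card_gt0P; exists v.
    by apply/negbTE/eqP; rewrite -addnn; lia.
  rewrite /=; lra.
Qed.

Lemma QAQ : mxT (qX X) *m mxT aE *m mxT (qX X) = mxT aS.
Proof.
rewrite QmL QmR; apply: mxT_ext => x y /=.
case Hx : (x \in X); case Hy : (y \in X).
- have e : \sum_(i in X) \sum_(z in X) aE z i = (kX%:R : rat) *+ #|X|.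
    rewrite -sumr_const; apply: eq_bigr => i Hi.
    by rewrite sumXa_l Hreg.
  rewrite sumrB -mulr_sumr e sumXa_r Hreg // sumXa_l Hreg //.
  rewrite -(mulr_natr (kX%:R)) mulrCA (cm Hx).
  rewrite /aS /GM_switch /half_vertex !XnY //= /aE; ring.
- rewrite sumXa_l (_ : aE x y = aE y x); last by rewrite /aE Hsym.
  by rewrite (side (negbT Hy) Hx) /aS swS.
- by rewrite sumXa_r (side (negbT Hx) Hy).
- by rewrite /aS /GM_switch Hx Hy !andbF.
Qed.


Lemma switch_srg v k l mu : (forall x, E x x = false) ->
  srg V E v k l mu -> srg V (GM_switch E X Y) v k l mu.
Proof.
move=> Eirr Hs.
have HsE := srg_eq Hsym Hsupp Eirr Hs.
have Ssupp : forall x y, GM_switch E X Y x y -> x \in V.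
  move=> x y; rewrite /GM_switch /half_vertex.
  case: ifP => [/orP [/andP [/andP [xY _] _]|/andP [_ xX]] _|_ /Hsupp //].
    exact: YV.
  exact: XV.
have Sirr : forall x, GM_switch E X Y x x = false.
  move=> x; rewrite /GM_switch orbb /half_vertex.
  case: (boolP (x \in X)) => xX; last by rewrite andbF Eirr.
  by rewrite XnY // Eirr.
apply: (eq_srg swS Ssupp Sirr); first by case: Hs.
set Qm := mxT (qX X).
have -> : mxT (aF (GM_switch E X Y)) = Qm *m mxT aE *m Qm by rewrite QAQ.
have -> : Qm *m mxT aE *m Qm *m (Qm *m mxT aE *m Qm) = Qm *m (mxT aE *m mxT aE) *m Qm.
  rewrite !mulmxA -(mulmxA (Qm *m mxT aE) Qm Qm) QQ mulmx1.
  by rewrite -(mulmxA Qm (mxT aE) (mxT aE)).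
have -> : mxT aE = mxT (aF E) by [].
rewrite HsE !mulmxDr !mulmxDl -!scalemxAr -!scalemxAl !mulmxBr !mulmxBl /Qm.
by rewrite QDQ QJQ.
Qed.

End Switch.

Lemma qadj_sym n (A : 'M['F_2]_(n.+1)) x y : qadj A x y = qadj A y x.
Proof.
case: (boolP (x \in qpoints A)) => Hx; last by rewrite /qadj (negbTE Hx) /= andbF.
case: (boolP (y \in qpoints A)) => Hy; last by rewrite /qadj (negbTE Hy) /= andbF.
rewrite !qadjE //.
have [H1 H2] := ptsP Hx; have [H3 H4] := ptsP Hy.
by rewrite H1 H2 H3 H4 eq_sym bilC.
Qed.

Theorem theorem3p3 (n : nat) (A : 'M['F_2]_(n.+1)) (g : nat) :
  nonsingular A -> proj_index A g -> (1 <= g)%N ->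
  forall (s : nat) (alpha : 'M['F_2]_(n.+1)),
    (s < g)%N -> in_quadric A alpha -> \rank alpha = s.+1 ->
    GM_partition (qpoints A) (qadj A) (Xs A alpha) (Ys A alpha) /\
    exists v k lam mu : nat,
      srg (qpoints A) (qadj A) v k lam mu /\
      srg (qpoints A) (GM_switch (qadj A) (Xs A alpha) (Ys A alpha)) v k lam mu.
Proof.
move=> NS _ _ s alpha _ Hal _.
have GM := GM_part NS Hal.
split => //.
exists #|qpoints A|, (Zs A - Pn n %/ 4 - 2)%N,
  (Zs A - Pn n %/ 4 - Pn n %/ 8 - 3)%N, ((Zs A - Pn n %/ 4) %/ 2 - 1)%N.
have Hs := gamma_srg NS.
split => //.
case: GM => HU HI [k Hk] HY.
have Hsym : forall x y, qadj A x y = qadj A y x by move=> x y; apply: qadj_sym.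
have Hsupp : forall x y, qadj A x y -> x \in qpoints A by move=> x y /and4P [].
have Hirr : forall x, qadj A x x = false by move=> x; rewrite /qadj eqxx /= !andbF.
exact: (switch_srg Hsym Hsupp HU HI Hk HY Hirr Hs).
Qed.
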